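(* Let $\Phi=\{\varphi_i\}_{i\in\Lambda}$ be a similarity IFS in $\mathbb{R}^d$ with contraction ratios $\{r_i\}_{i\in\Lambda}$ and attractor $K$, and let $r_{\min}=\min_ir_i$. Let $T$ be a tree with alphabet $\Lambda$ which is $(K,c)$-diffuse for some $c>0$. Then $\gamma_\Phi(\partial T)$ is hyperplane $c\,\frac{r_{\min}}{\operatorname{diam}(K)}$-diffuse.
   Context: A similarity IFS is a finite family of contracting similarities $\varphi_i$ of $\mathbb{R}^d$ with ratios $r_i\in(0,1)$; its attractor $K$ satisfies $K=\bigcup_i\varphi_iK$; $\varphi_{i_1\dots i_n}=\varphi_{i_1}\circ\cdots\circ\varphi_{i_n}$; $\gamma_\Phi(j)$ is the point of $\bigcap_n\varphi_{j_1\dots j_n}(K)$ for $j\in\Lambda^{\mathbb{N}}$. A tree is a prefix-closed set $T$ of finite words over $\Lambda$ containing the empty word; $W_T(i)=\{a\in\Lambda: ia\in T\}$; $\partial T$ = infinite words whose prefixes all lie in $T$. A finite set $A$ of words is $(K,c)$-diffuse if for every affine hyperplane $\mathcal{L}$ there is $j\in A$ with $\varphi_jK\cap\mathcal{L}^{(c)}=\emptyset$ ($\mathcal{L}^{(c)}$ the open $c$-neighborhood). $T$ is $(K,c)$-diffuse if $W_T(i)$ is $(K,c)$-diffuse for every $i\in T$. A closed set $E$ is hyperplane $\beta$-diffuse if there is $\xi_0>0$ such that for all $\xi\in(0,\xi_0)$, $x\in E$, and affine hyperplanes $\mathcal{L}$, $E\cap B_\xi(x)\setminus\mathcal{L}^{(\beta\xi)}\ne\emptyset$.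 *)

(* Defs.v *)
From HB Require Import structures.
From mathcomp Require Import all_boot all_order all_algebra.
From mathcomp Require Import all_classical all_reals topology normedtype.
Set Implicit Arguments. Unset Strict Implicit. Unset Printing Implicit Defensive.
Import Order.TTheory GRing.Theory Num.Theory.
Import numFieldTopology.Exports numFieldNormedType.Exports.
Local Open Scope classical_set_scope.
Local Open Scope ring_scope.

Section Defs.
Variables (R : realType) (d : nat).
Notation pt := 'rV[R]_d.

Definition edist (x y : pt) : R := Num.sqrt (\sum_(k < d) (x 0 k - y 0 k) ^+ 2).

Definition similarity (f : pt -> pt) (r : R) : Prop :=
  forall x y, edist (f x) (f y) = r * edist x y.

Definition diam (K : set pt) : R :=
  sup [set t | exists x y, K x /\ K y /\ t = edist x y].

Definition affine_hyperplane (L : set pt) : Prop :=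
  exists (a : pt) (b : R), a != 0 /\ L = [set x | \sum_(k < d) a 0 k * x 0 k = b].

Definition nbhd_set (L : set pt) (c : R) : set pt :=
  [set x | exists y, L y /\ edist x y < c].

Definition cball (x : pt) (xi : R) : set pt := [set y | edist x y <= xi].

Definition hyperplane_diffuse (beta : R) (E : set pt) : Prop :=
  closed E /\
  exists xi0 : R, 0 < xi0 /\
    forall xi x L, 0 < xi -> xi < xi0 -> E x -> affine_hyperplane L ->
      exists y, E y /\ cball x xi y /\ ~ nbhd_set L (beta * xi) y.

Variable (Lam : finType) (phi : Lam -> pt -> pt).

Definition phiw (w : seq Lam) : pt -> pt := foldr (fun i f => phi i \o f) id w.

Definition prefix (j : nat -> Lam) (n : nat) : seq Lam := mkseq j n.

Definition gamma_pt (K : set pt) (j : nat -> Lam) (x : pt) : Prop :=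
  forall n, (phiw (prefix j n) @` K) x.

Definition is_tree (T : set (seq Lam)) : Prop :=
  T [::] /\ forall w n, T w -> T (take n w).

Definition W_T (T : set (seq Lam)) (i : seq Lam) : set Lam := [set a | T (rcons i a)].

Definition boundary (T : set (seq Lam)) : set (nat -> Lam) :=
  [set j | forall n, T (prefix j n)].

Definition gamma_img (K : set pt) (A : set (nat -> Lam)) : set pt :=
  [set x | exists j, A j /\ gamma_pt K j x].

Definition diffuse_words (K : set pt) (c : R) (A : set (seq Lam)) : Prop :=
  forall L, affine_hyperplane L ->
    exists w, A w /\ phiw w @` K `&` nbhd_set L c = set0.

Definition diffuse_tree (K : set pt) (c : R) (T : set (seq Lam)) : Prop :=
  forall i, T i -> diffuse_words K c [set [:: a] | a in W_T T i].

End Defs.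

(* Main.v *)
Set Implicit Arguments. Unset Strict Implicit. Unset Printing Implicit Defensive.
Require Import Defs.
From HB Require Import structures.
From mathcomp Require Import all_boot all_order all_algebra.
From mathcomp Require Import all_classical all_reals topology normedtype.
From mathcomp Require Import sequences ring lra.
Import Order.TTheory GRing.Theory Num.Theory.
Import numFieldTopology.Exports numFieldNormedType.Exports.
Local Open Scope classical_set_scope.
Local Open Scope ring_scope.

Local Notation edist := Defs.edist.
Local Notation prefix := Defs.prefix.
Local Notation diam := Defs.diam.
Local Notation phiw := Defs.phiw.
Local Notation boundary := Defs.boundary.
Section LinAlg.
Variables (R : realType) (d : nat).
Notation pt := 'rV[R]_d.

Definition ip (x y : pt) : R := \sum_(k < d) x 0 k * y 0 k.

Lemma ipC x y : ip x y = ip y x.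
Proof. by apply: eq_bigr => k _; rewrite mulrC. Qed.

Lemma ipDl x y z : ip (x + y) z = ip x z + ip y z.
Proof. by rewrite /ip -big_split; apply: eq_bigr => k _; rewrite mxE mulrDl. Qed.

Lemma ipNl x z : ip (- x) z = - ip x z.
Proof. by rewrite /ip -sumrN; apply: eq_bigr => k _; rewrite mxE mulNr. Qed.

Lemma ipZl a x z : ip (a *: x) z = a * ip x z.
Proof. by rewrite /ip mulr_sumr; apply: eq_bigr => k _; rewrite mxE mulrA. Qed.

Lemma ip0l z : ip 0 z = 0.
Proof. by rewrite /ip big1 // => k _; rewrite mxE mul0r. Qed.

Lemma ipBl x y z : ip (x - y) z = ip x z - ip y z.
Proof. by rewrite ipDl ipNl. Qed.

Lemma ipDr x y z : ip z (x + y) = ip z x + ip z y.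
Proof. by rewrite ipC ipDl ipC [ip y _]ipC. Qed.
Lemma ipBr x y z : ip z (x - y) = ip z x - ip z y.
Proof. by rewrite ipC ipBl ipC [ip y _]ipC. Qed.
Lemma ipZr a x z : ip z (a *: x) = a * ip z x.
Proof. by rewrite ipC ipZl ipC. Qed.

Lemma ip_suml (I : finType) (F : I -> pt) z :
  ip (\sum_i F i) z = \sum_i ip (F i) z.
Proof.
exact: (big_morph (fun u => ip u z) (fun u v => ipDl u v z) (ip0l z)).
Qed.
Lemma ip_sumr (I : finType) (F : I -> pt) z :
  ip z (\sum_i F i) = \sum_i ip z (F i).
Proof. by rewrite ipC ip_suml; apply: eq_bigr => i _; rewrite ipC. Qed.

Lemma ip_ge0 x : 0 <= ip x x.
Proof. by apply: sumr_ge0 => k _; rewrite -expr2 sqr_ge0. Qed.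

Lemma ip_eq0 x : ip x x = 0 -> x = 0.
Proof.
move=> /eqP; rewrite psumr_eq0; last by move=> k _; rewrite -expr2 sqr_ge0.
move=> /allP H; apply/rowP => k; rewrite mxE.
by have /H := mem_index_enum k; rewrite /= mulf_eq0 orbb => /eqP.
Qed.

Lemma ip_mx x y : ip x y = (x *m y^T) 0 0.
Proof. by rewrite mxE; apply: eq_bigr => k _; rewrite mxE. Qed.

Lemma ip_delta i z : ip (delta_mx 0 i) z = z 0 i.
Proof.
rewrite /ip (bigD1 i) //= big1 ?addr0; first by rewrite mxE !eqxx mul1r.
by move=> k ki; rewrite mxE eqxx andTb (negbTE ki) mul0r.
Qed.

Lemma edistE x y : edist x y = Num.sqrt (ip (x - y) (x - y)).
Proof.
by rewrite /edist /ip; congr Num.sqrt; apply: eq_bigr => k _; rewrite !mxE expr2.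
Qed.

Lemma edist_sq x y : edist x y ^+ 2 = ip (x - y) (x - y).
Proof. by rewrite edistE sqr_sqrtr // ip_ge0. Qed.

Lemma ed_ge0 (x y : pt) : 0 <= edist x y.
Proof. exact: sqrtr_ge0. Qed.

Lemma ip_polar u v : ip u v = (ip u u + ip v v - ip (u - v) (u - v)) / 2.
Proof.
rewrite ipBl !ipBr [ip v u]ipC.
set a := ip u u; set b := ip u v; set c := ip v v.
by field.
Qed.

Definition affmap (g : pt -> pt) :=
  exists (M N : 'M[R]_d) (f0 : pt), N *m M = 1%:M /\ forall x, g x = x *m M + f0.

Lemma affmap_id : affmap id.
Proof. by exists 1%:M, 1%:M, 0; rewrite mulmx1; split=> // x; rewrite mulmx1 addr0. Qed.

Lemma affmap_comp f g : affmap f -> affmap g -> affmap (f \o g).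
Proof.
move=> [M1 [N1 [f1 [H1 E1]]]] [M2 [N2 [f2 [H2 E2]]]].
exists (M2 *m M1), (N1 *m N2), (f2 *m M1 + f1); split.
  by rewrite mulmxA -(mulmxA N1) H2 mulmx1 H1.
by move=> x /=; rewrite E2 E1 mulmxDl mulmxA addrA.
Qed.

Lemma affmap_surj g : affmap g -> forall v, exists z, g z = v.
Proof.
move=> [M [N [f0 [H E]]]] v; exists ((v - f0) *m N).
by rewrite E -mulmxA H mulmx1 subrK.
Qed.

Lemma ip_mulmx a z (M : 'M[R]_d) : ip a (z *m M) = ip (a *m M^T) z.
Proof. by rewrite !ip_mx trmx_mul mulmxA. Qed.

Lemma affmap_hyper g L : affmap g -> affine_hyperplane L ->
  affine_hyperplane (g @^-1` L).
Proof.
move=> [M [N [f0 [H E]]]] [a [b [a0 ->]]].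
exists (a *m M^T), (b - ip a f0); split.
  apply/negP => /eqP aM0; move/negP: a0; apply; apply/eqP/ip_eq0.
  have ea : a = (a *m N) *m M by rewrite -mulmxA H mulmx1.
  by rewrite {2}ea ip_mulmx aM0 ip0l.
apply/seteqP; split=> z /=; rewrite /preimage /= E.
  change (ip a (z *m M + f0) = b -> ip (a *m M^T) z = b - ip a f0).
  by rewrite ipDr ip_mulmx => <-; rewrite addrK.
change (ip (a *m M^T) z = b - ip a f0 -> ip a (z *m M + f0) = b).
by rewrite ipDr ip_mulmx => ->; rewrite subrK.
Qed.

Lemma sim_affine f r : 0 < r -> similarity f r -> affmap f.
Proof.
move=> r0 sf.
pose h x := f x - f 0.
have hB x y : h x - h y = f x - f y by rewrite /h opprB addrA subrK.
have H1 x y : ip (h x - h y) (h x - h y) = r ^+ 2 * ip (x - y) (x - y).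
  by rewrite hB -!edist_sq sf exprMn.
have H0 x : ip (h x) (h x) = r ^+ 2 * ip x x.
  by have := H1 x 0; rewrite /h subrr !subr0.
have Hip x y : ip (h x) (h y) = r ^+ 2 * ip x y.
  by rewrite ip_polar (ip_polar x y) H1 !H0; ring.
pose M := \matrix_(i < d, j < d) h (delta_mx 0 i) 0 j.
have rowM i : row i M = h (delta_mx 0 i).
  by apply/rowP => j; rewrite !mxE.
have xM x : x *m M = \sum_i x 0 i *: h (delta_mx 0 i).
  by rewrite mulmx_sum_row; apply: eq_bigr => i _; rewrite rowM.
have A z x : ip (h z) (x *m M) = r ^+ 2 * ip z x.
  rewrite xM ip_sumr.
  under eq_bigr do rewrite ipZr Hip ipC ip_delta.
  rewrite /ip mulr_sumr; apply: eq_bigr => i _; ring.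
have B x : ip (x *m M) (x *m M) = r ^+ 2 * ip x x.
  rewrite {1}xM ip_suml.
  under eq_bigr do rewrite ipZl A ip_delta.
  rewrite /ip mulr_sumr; apply: eq_bigr => i _; ring.
have hx x : h x = x *m M.
  apply/eqP; rewrite -subr_eq0; apply/eqP/ip_eq0.
  rewrite ipBl (ipBr (h x) (x *m M) (h x)) (ipBr (h x) (x *m M) (x *m M)).
  rewrite H0 A B [ip (x *m M) (h x)]ipC A; ring.
have MMt : M *m M^T = (r ^+ 2)%:M.
  apply/matrixP => i j; rewrite !mxE.
  rewrite (_ : \sum_j0 _ = ip (h (delta_mx 0 i)) (h (delta_mx 0 j))).
    rewrite Hip ip_delta mxE eqxx /=.
    by rewrite mulr_natr.
  by apply: eq_bigr => k _; rewrite !mxE.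
have r2 : r ^+ 2 != 0 by rewrite expf_neq0 // gt_eqF.
exists M, ((r ^+ 2)^-1 *: M^T), (f 0); split.
  apply: mulmx1C; rewrite -scalemxAr MMt -scalemx1 scalerA mulVf // scale1r.
  by [].
by move=> x; rewrite -hx /h subrK.
Qed.

End LinAlg.
Section Metric.
Variables (R : realType) (d : nat).
Notation pt := 'rV[R]_d.

Lemma entry_le_edist (x y : pt) k : `|x 0 k - y 0 k| <= edist x y.
Proof.
rewrite /edist -sqrtr_sqr ler_sqrt; last by apply: sumr_ge0 => i _; rewrite sqr_ge0.
rewrite (bigD1 k) //= lerDl; apply: sumr_ge0 => i _; exact: sqr_ge0.
Qed.

Lemma norm_le_edist (x y : pt) : `|x - y| <= edist x y.
Proof.
rewrite [X in X <= _]/Num.norm /= mx_normrE.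
apply: bigmax_le; first exact: ed_ge0.
move=> [i k] _ /=; rewrite (ord1 i) !mxE; exact: entry_le_edist.
Qed.

Lemma entry_le_norm (u : pt) k : `|u 0 k| <= `|u|.
Proof.
rewrite [X in _ <= X]/Num.norm /= mx_normrE.
exact: (le_bigmax _ (fun ij : 'I_1 * 'I_d => `|u ij.1 ij.2|) (0, k)).
Qed.

Lemma edist_le_norm (x y : pt) : edist x y <= d%:R * `|x - y|.
Proof.
set n := `|x - y|.
have n0 : 0 <= n by exact: normr_ge0.
rewrite /edist -[X in _ <= X]ger0_norm ?mulr_ge0 // -sqrtr_sqr ler_sqrt ?sqr_ge0 //.
apply: (@le_trans _ _ (\sum_(k < d) n ^+ 2)).
  apply: ler_sum => k _.
  have := entry_le_norm (x - y) k; rewrite !mxE -/n => h.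
  have := ler_norml (x 0 k - y 0 k) n; rewrite h => /esym/andP[h1 h2].
  nra.
rewrite sumr_const card_ord exprMn.
have : (d%:R : R) <= d%:R ^+ 2.
  rewrite -natrX ler_nat; case: (d) => // m. rewrite expnS leq_pmulr // expn_gt0 //.
rewrite -mulr_natl; have := sqr_ge0 n; nra.
Qed.

Lemma sim_cont (f : pt -> pt) s : 0 <= s -> similarity f s -> continuous f.
Proof.
move=> s0 sf x; have FF : Filter (nbhs x) by exact: nbhs_filter.
apply/cvgrPdist_lt => e e0.
apply/(@nbhs_ballP R [the pseudoMetricType R of 'rV[R]_d] x).
have k0 : 0 < s * d%:R + 1 by rewrite ltr_pwDr // mulr_ge0.
exists (e / (s * d%:R + 1)); first by rewrite /= divr_gt0.
move=> t; rewrite -ball_normE /= => xt.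
apply: (le_lt_trans (norm_le_edist _ _)); rewrite sf.
apply: (le_lt_trans (ler_wpM2l s0 (edist_le_norm x t))).
have nt : 0 <= `|x - t| by exact: normr_ge0.
rewrite ltr_pdivlMr // in xt.
nra.
Qed.

Lemma compact_img_closed (f : pt -> pt) s (K : set pt) : 0 <= s -> similarity f s ->
  compact K -> closed (f @` K).
Proof.
move=> s0 sf cK; apply: compact_closed; first exact: norm_hausdorff.
apply: continuous_compact => //; apply: continuous_subspaceT; exact: sim_cont sf.
Qed.

Lemma compact_edist_ub (K : set pt) : compact K ->
  exists B, forall x y, K x -> K y -> edist x y <= B.
Proof.
move=> cK; have [M [_ HM]] := compact_bounded cK.
have HM1 := HM (`|M| + 1) ltac:(rewrite (le_lt_trans (ler_norm M)) // ltrDl).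
exists (d%:R * ((`|M| + 1) + (`|M| + 1))) => x y Kx Ky.
apply: (le_trans (edist_le_norm x y)); apply: ler_wpM2l => //.
apply: (le_trans (ler_normB x y)); apply: lerD; exact: HM1.
Qed.

End Metric.
Section Words.
Variable Lam : finType.

Lemma pfxS (j : nat -> Lam) n : prefix j n.+1 = rcons (prefix j n) (j n).
Proof. exact: mkseqS. Qed.

Lemma size_pfx (j : nat -> Lam) n : size (prefix j n) = n.
Proof. exact: size_mkseq. Qed.

Lemma pfx_take (j : nat -> Lam) n m : (n <= m)%N -> prefix j n = take n (prefix j m).
Proof.
move=> nm; apply: (@eq_from_nth _ (j 0%N)).
  by rewrite size_takel ?size_pfx.
move=> k; rewrite size_pfx => kn.
by rewrite nth_take // !nth_mkseq // (leq_trans kn nm).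
Qed.

Lemma extend_word (P : seq Lam -> Prop) (a0 : Lam) u :
  P u -> (forall v, P v -> exists a, P (rcons v a)) ->
  exists j : nat -> Lam, prefix j (size u) = u /\ forall m, P (prefix j (size u + m)).
Proof.
move=> Pu Hch.
have [g Hg] : {g : seq Lam -> Lam & forall v, P v -> P (rcons v (g v))}.
  apply: (@choice _ _ (fun v a => P v -> P (rcons v a))) => v; case: (pselect (P v)) => Pv; last by exists a0.
  by have [a Pa] := Hch v Pv; exists a.
pose U m := iter m (fun v => rcons v (g v)) u.
have PU m : P (U m) by elim: m => //= m IH; apply: Hg.
have sU m : size (U m) = (size u + m)%N.
  by elim: m => [|m IH] /=; rewrite ?addn0 // size_rcons IH addnS.
have catU m k : exists s, U (m + k)%N = U m ++ s.
  elim: k => [|k [s IH]]; first by exists [::]; rewrite addn0 cats0.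
  by exists (rcons s (g (U (m + k)%N))); rewrite addnS /= IH rcons_cat.
have nthU a b k : (k < size (U a))%N -> (k < size (U b))%N ->
    nth a0 (U a) k = nth a0 (U b) k.
  wlog ab : a b / (a <= b)%N.
    move=> W ka kb; case: (leqP a b) => [/W|/ltnW/W]; [exact|].
    by move=> W'; rewrite W'.
  move=> ka _; rewrite -(subnKC ab); have [s ->] := catU a (b - a)%N.
  by rewrite nth_cat ka.
pose j k := nth a0 (U k.+1) k.
have pU m : prefix j (size u + m) = U m.
  apply: (@eq_from_nth _ a0); first by rewrite size_pfx sU.
  move=> k; rewrite size_pfx => km.
  rewrite nth_mkseq // /j; apply: nthU; rewrite sU //.
  by rewrite addnS ltnS leq_addl.
exists j; split; first by have := pU 0%N; rewrite addn0.
by move=> m; rewrite pU.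
Qed.

Variables (R : realType) (d : nat) (phi : Lam -> 'rV[R]_d -> 'rV[R]_d).

Lemma phiw_cat w v x : phiw phi (w ++ v) x = phiw phi w (phiw phi v x).
Proof. by elim: w => //= i w IH; rewrite IH. Qed.

Lemma phiw_sim (r : Lam -> R) : (forall i, similarity (phi i) (r i)) ->
  forall w, similarity (phiw phi w) (\prod_(i <- w) r i).
Proof.
move=> hs; elim => [|i w IH] x y /=; first by rewrite big_nil mul1r.
by rewrite big_cons hs IH mulrA.
Qed.

Lemma phiw_aff (r : Lam -> R) : (forall i, 0 < r i) -> (forall i, similarity (phi i) (r i)) ->
  forall w, affmap (phiw phi w).
Proof.
move=> hr hs; elim => [|i w IH] /=; first exact: affmap_id.
by apply: affmap_comp => //; exact: sim_affine (hr i) (hs i).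
Qed.

End Words.
Section Main.
Variables (R : realType) (d : nat) (Lam : finType)
  (phi : Lam -> 'rV[R]_d -> 'rV[R]_d) (r : Lam -> R) (K : set 'rV[R]_d).
Hypotheses (hr : forall i, 0 < r i < 1) (hs : forall i, similarity (phi i) (r i))
  (cK : compact K) (K0 : K !=set0) (hK : K = \bigcup_(i in [set: Lam]) (phi i @` K)).

Let hr0 i : 0 < r i. Proof. by case/andP: (hr i). Qed.

Lemma phiK i k : K k -> K (phi i k).
Proof. by move=> Kk; rewrite hK; exists i => //; exists k. Qed.

Lemma phiwK w k : K k -> K (phiw phi w k).
Proof. by elim: w => //= i w IH Kk; apply: phiK; apply: IH. Qed.

Lemma phiw_closed w : closed (phiw phi w @` K).
Proof.
apply: (@compact_img_closed _ _ _ (\prod_(i <- w) r i)) => //.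
  by apply: prodr_ge0 => i _; exact: ltW.
exact: phiw_sim.
Qed.

Lemma gamma_exists (j : nat -> Lam) : exists y, gamma_pt phi K j y.
Proof.
have [k0 Kk0] := K0.
move: cK; rewrite compact_In0 => /(_ nat setT (fun n => K `&` (phiw phi (prefix j n) @` K))).
case.
- exists (fun n => phiw phi (prefix j n) @` K) => // n _; exact: phiw_closed.
- move=> D' _; pose N := (\max_(i <- finmap.enum_fset D') i)%N.
  exists (phiw phi (prefix j N) k0) => i /= iD.
  have iN : (i <= N)%N by apply: (@leq_bigmax_seq _ _ xpredT id).
  split; first exact: phiwK.
  rewrite (@pfx_take _ j _ _ iN) -{2}(cat_take_drop i (prefix j N)) phiw_cat.
  by exists (phiw phi (drop i (prefix j N)) k0) => //; exact: phiwK.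
- by move=> y Hy; exists y => n; case: (Hy n I).
Qed.


Lemma closure_approx (E : set 'rV[R]_d) x : closure E x ->
  forall e, 0 < e -> exists y, E y /\ edist x y < e.
Proof.
move=> cl e e0.
have d0 : 0 < d%:R + 1 :> R by rewrite ltr_pwDr.
have dl : 0 < e / (d%:R + 1) by rewrite divr_gt0.
have [y [Ey bxy]] := cl _ (@nbhsx_ballx R [the pseudoMetricType R of 'rV[R]_d] x _ dl).
exists y; split => //.
move: bxy; rewrite -ball_normE /= ltr_pdivlMr // => h.
apply: (le_lt_trans (edist_le_norm x y)).
have nt : 0 <= `|x - y| by exact: normr_ge0.
nra.
Qed.

Lemma approx_closed (A : set 'rV[R]_d) x : closed A ->
  (forall e, 0 < e -> exists y, A y /\ edist x y < e) -> A x.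
Proof.
move=> clA H; apply: clA => B.
move=> /(@nbhs_ballP R [the pseudoMetricType R of 'rV[R]_d] x) [e /= e0 sB].
have [y [Ay xy]] := H e e0; exists y; split => //; apply: sB.
rewrite -ball_normE /=; exact: (le_lt_trans (norm_le_edist x y)).
Qed.

Lemma closedE (T : set (seq Lam)) : closed (gamma_img phi K (boundary T)).
Proof.
move=> x clx.
have ap := closure_approx clx.
pose good (w : seq Lam) := forall e, 0 < e -> exists j y, boundary T j /\
  gamma_pt phi K j y /\ prefix j (size w) = w /\ edist x y < e.
have g0 : good [::].
  move=> e e0; have [y [[j [bj gy]] xy]] := ap e e0.
  by exists j, y.
have gS v : good v -> exists a, good (rcons v a).
  move=> gv; apply: contrapT => /forallNP Hn.
  have [eps Heps] : {eps : Lam -> R & forall a, 0 < eps a /\ ~ (exists j y, boundary T j /\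
      gamma_pt phi K j y /\ prefix j (size (rcons v a)) = rcons v a /\ edist x y < eps a)}.
    apply: (@choice _ _ (fun a e => 0 < e /\ ~ (exists j y, boundary T j /\
      gamma_pt phi K j y /\ prefix j (size (rcons v a)) = rcons v a /\ edist x y < e))) => a.
    have /existsNP [e He] := Hn a.
    move/not_implyP: He => [e0 He]; by exists e.
  pose e := \big[Order.min/1]_a eps a.
  have e0 : 0 < e by apply: lt_bigmin => // a _; case: (Heps a).
  have [j [y [bj [gy [pj xy]]]]] := gv e e0.
  case: (Heps (j (size v))) => _; apply.
  exists j, y; split => //; split => //; split.
    by rewrite size_rcons pfxS pj.
  by apply: (lt_le_trans xy); exact: bigmin_le.
have [a0 _] : exists a : Lam, True.
  have [k0 Kk0] := K0; move: Kk0; rewrite hK => -[i _ _]; by exists i.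
have [j [_ Hj]] := extend_word a0 g0 gS.
exists j; split.
  move=> n; have [j' [y [bj' [_ [pj' _]]]]] := Hj n 1 ltr01.
  by move: pj'; rewrite /= size_pfx => <-; apply: bj'.
move=> n; apply: approx_closed; first exact: phiw_closed.
move=> e e0; have [j' [y [_ [gy [pj' xy]]]]] := Hj n e e0.
exists y; split => //; move: (gy n); rewrite /= size_pfx in pj'.
by rewrite pj'.
Qed.


Lemma edist_xx (x : 'rV[R]_d) : edist x x = 0.
Proof. by rewrite edistE subrr ip0l sqrtr0. Qed.

Lemma diam_ub k1 k2 : K k1 -> K k2 -> edist k1 k2 <= diam K.
Proof.
move=> K1 K2; apply: sup_upper_bound; last by exists k1, k2.
split; first by exists (edist k1 k2), k1, k2.
have [B HB] := compact_edist_ub cK.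
by exists B => t [x [y [Kx [Ky ->]]]]; apply: HB.
Qed.

Lemma diam_ge0 : 0 <= diam K.
Proof.
have [k Kk] := K0; apply: le_trans (diam_ub Kk Kk).
by rewrite edist_xx.
Qed.

Lemma pow_small (q e : R) : 0 <= q -> q < 1 -> 0 < e -> exists n, q ^+ n <= e.
Proof.
move=> q0 q1 e0.
have := @cvg_expr R q; rewrite ger0_norm // => /(_ q1 (ball 0 e)).
case; first exact: nbhsx_ballx.
move=> N _ HN; exists N; have := HN N (leqnn N).
rewrite /= -ball_normE /= sub0r normrN ger0_norm ?exprn_ge0 // => h.
exact: ltW.
Qed.

Lemma geom_small (j : nat -> Lam) e : 0 < e ->
  exists n, \prod_(i <- prefix j n) r i <= e.
Proof.
move=> e0.
pose q := \big[Order.max/0]_i r i.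
have q0 : 0 <= q by exact: bigmax_ge_id.
have q1 : q < 1 by apply: bigmax_lt => // i _; case/andP: (hr i).
have rq i : r i <= q by exact: le_bigmax.
have [n hn] := pow_small q0 q1 e0.
exists n; apply: le_trans hn.
elim: n => [|n IH]; first by rewrite big_nil expr0.
rewrite pfxS big_rcons /= exprSr; apply: ler_pM => //.
  by apply: prodr_ge0 => i _; exact: ltW.
exact: ltW.
Qed.


Lemma main_sec (T : set (seq Lam)) (c : R) :
  is_tree T -> 0 < c -> diffuse_tree phi K c T ->
  hyperplane_diffuse
    (c * (\big[Order.min/1]_(i : Lam) r i) / diam K) (gamma_img phi K (boundary T)).
Proof.
move=> hT c0 hD.
set rmin := \big[Order.min/1]_i r i.
have rmin0 : 0 < rmin by apply: lt_bigmin => // i _; exact: hr0.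
have rminle i : rmin <= r i by exact: bigmin_le.
split; first exact: closedE.
set D := diam K.
have D0 : 0 <= D := diam_ge0.
case: (ltrP 0 (c * rmin / D)) => hb; last first.
  exists 1; split => // xi x L xi0 _ Ex _; exists x; split => //; split.
    by rewrite /cball /= edist_xx ltW.
  move=> [l [_ xl]]; have := ed_ge0 x l.
  have : c * rmin / D * xi <= 0 by nra.
  lra.
have Dpos : 0 < D.
  case: (ltrP 0 D) => // D0'.
  have D00 : D = 0 by apply/le_anti; rewrite D0' D0.
  by move: hb; rewrite D00 invr0 mulr0 ltxx.
exists D; split => // xi x L xi0 xiD [j [bj gx]] hL.
have children v : T v -> exists a, T (rcons v a).
  by move=> Tv; have [w [[a Wa <-] _]] := hD v Tv L hL; exists a.
pose rw w := \prod_(i <- w) r i.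
have rw0 w : 0 < rw w by apply: prodr_gt0 => i _; exact: hr0.
have exP : exists n, (rw (prefix j n) * D <= xi).
  have [n hn] := geom_small j (divr_gt0 xi0 Dpos); exists n.
  by rewrite ler_pdivlMr // in hn.
case: (ex_minnP exP) => n Pn nmin.
case: n Pn nmin => [|m] Pn nmin.
  by move: Pn; rewrite /rw big_nil mul1r leNgt xiD.
have notPm : xi < rw (prefix j m) * D.
  rewrite ltNge; apply/negP => Pm; have := nmin m Pm; by rewrite ltnn.
set w := prefix j m.+1.
have rww : rw w = rw (prefix j m) * r (j m) by rewrite /w pfxS /rw big_rcons.
have key : c * rmin / D * xi < c * rw w.
  have h1 : xi / D < rw (prefix j m) by rewrite ltr_pdivrMr.
  have -> : c * rmin / D * xi = c * rmin * (xi / D) by rewrite mulrAC -!mulrA.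
  rewrite rww; apply: (lt_le_trans (y := c * rmin * rw (prefix j m))).
    by rewrite ltr_pM2l // mulr_gt0.
  rewrite -mulrA; apply: ler_wpM2l; first exact: ltW.
  rewrite mulrC; apply: ler_wpM2l => //; exact: ltW.
have Tw : T w by exact: bj.
have affw := phiw_aff hr0 hs w.
have hL' := affmap_hyper affw hL.
have [w' [[a Wa <-] disj]] := hD w Tw _ hL'.
have [j' [pj' Tj']] := extend_word a (P := T) (u := rcons w a) Wa children.
have bj' : boundary T j'.
  move=> N; rewrite (@pfx_take _ j' N (size (rcons w a) + N) (leq_addl _ _)).
  by case: hT => _ tk; apply: tk; exact: Tj'.
have [y gy] := gamma_exists j'.
exists y; split; first by exists j'.
have := gy (size (rcons w a)); rewrite pj' => -[k2 Kk2 yk2].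
rewrite -cats1 phiw_cat in yk2; change (phiw phi w (phi a k2) = y) in yk2.
have := gx m.+1 => -[k1 Kk1 xk1].
have simw := phiw_sim hs w.
split.
  rewrite /cball /= -xk1 -yk2 (simw k1 (phi a k2)).
  apply: le_trans Pn; apply: ler_wpM2l; first exact: ltW (rw0 w).
  exact: diam_ub (phiK a Kk2).
move=> [l [Ll yl]].
have [l' el'] := affmap_surj affw l.
have : (phiw phi [:: a] @` K `&` nbhd_set (phiw phi w @^-1` L) c) (phi a k2).
  split; first by exists k2.
  exists l'; split; first by change (L (phiw phi w l')); rewrite el'.
  move: yl; rewrite -yk2 -el' (simw (phi a k2) l') => h.
  rewrite -(ltr_pM2l (rw0 w)) [rw w * c]mulrC; exact: lt_trans h key.
by rewrite disj.
Qed.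

End Main.

Theorem proposition3p11 (R : realType) (d : nat) (Lam : finType)
  (phi : Lam -> 'rV[R]_d -> 'rV[R]_d) (r : Lam -> R) (K : set 'rV[R]_d)
  (T : set (seq Lam)) (c : R) :
  (forall i, 0 < r i < 1) ->
  (forall i, similarity (phi i) (r i)) ->
  compact K -> K !=set0 -> K = \bigcup_(i in [set: Lam]) (phi i @` K) ->
  is_tree T -> 0 < c -> diffuse_tree phi K c T ->
  hyperplane_diffuse
    (c * (\big[Order.min/1]_(i : Lam) r i) / diam K) (gamma_img phi K (boundary T)).
Proof.
move=> hr hs cK K0 hK hT c0 hD.
exact: (main_sec hr hs cK K0 hK hT c0 hD).
Qed.
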